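(* If $f:\mathbb{R}\to\mathbb{R}_{>0}$ is very rapidly decreasing and $g:\mathbb{R}\to\mathbb{R}_{>0}$ is a positive, bounded, continuous function, then $fg$ is very rapidly decreasing.
   Context: A positive function $f:\mathbb{R}\to\mathbb{R}_{>0}$ is called very rapidly decreasing (VRD) if every smooth compactly supported function $h:\mathbb{R}\to\mathbb{R}$ is a uniform limit on $\mathbb{R}$ of functions of the form $f(x)P(x)$ with $P$ a real polynomial. *)

(* Defs.v *)
From Stdlib Require Import Reals List.
Open Scope R_scope.

(* Evaluation of a real polynomial given by its coefficient list
   [a0; a1; ...; an], i.e. a0 + a1 x + ... + an x^n (Horner). *)
Fixpoint poly_eval (p : list R) (x : R) : R :=
  match p with
  | nil => 0
  | a :: q => a + x * poly_eval q x
  end.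

Definition smooth (h : R -> R) : Prop :=
  exists D : nat -> R -> R,
    D 0%nat = h /\
    forall (n : nat) (x : R), derivable_pt_lim (D n) x (D (S n) x).

Definition compact_support (h : R -> R) : Prop :=
  exists M : R, forall x : R, M < Rabs x -> h x = 0.

Definition VRD (f : R -> R) : Prop :=
  (forall x : R, 0 < f x) /\
  forall h : R -> R, smooth h -> compact_support h ->
    forall eps : R, 0 < eps ->
      exists P : list R, forall x : R, Rabs (h x - f x * poly_eval P x) <= eps.

(* Main.v *)
Require Import Defs.
From Stdlib Require Import Reals Lra Lia List FunctionalExtensionality.
Open Scope R_scope.

Fixpoint padd (p q : list R) : list R :=
  match p, q with
  | nil, _ => q
  | _, nil => p
  | a :: p', b :: q' => (a + b) :: padd p' q'
  end.

Lemma padd_eval p q x : poly_eval (padd p q) x = poly_eval p x + poly_eval q x.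
Proof.
  revert q; induction p as [|a p IH]; intros [|b q]; simpl; try ring.
  rewrite IH; ring.
Qed.

Definition pscal (c : R) (p : list R) := map (Rmult c) p.

Lemma pscal_eval c p x : poly_eval (pscal c p) x = c * poly_eval p x.
Proof. induction p as [|a p IH]; simpl; [ring|rewrite IH; ring]. Qed.

Fixpoint pmul (p q : list R) : list R :=
  match p with
  | nil => nil
  | a :: p' => padd (pscal a q) (0 :: pmul p' q)
  end.

Lemma pmul_eval p q x : poly_eval (pmul p q) x = poly_eval p x * poly_eval q x.
Proof.
  induction p as [|a p IH]; simpl; [ring|].
  rewrite padd_eval, pscal_eval; simpl; rewrite IH; ring.
Qed.

Definition is_poly (F : R -> R) := exists P, forall x, F x = poly_eval P x.

Lemma is_poly_const c : is_poly (fun _ => c).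
Proof. exists (c :: nil); intros; simpl; ring. Qed.

Lemma is_poly_id : is_poly (fun x => x).
Proof. exists (0 :: 1 :: nil); intros; simpl; ring. Qed.

Lemma is_poly_plus F G : is_poly F -> is_poly G -> is_poly (fun x => F x + G x).
Proof. intros [P HP] [Q HQ]; exists (padd P Q); intros; rewrite padd_eval, HP, HQ; auto. Qed.

Lemma is_poly_mult F G : is_poly F -> is_poly G -> is_poly (fun x => F x * G x).
Proof. intros [P HP] [Q HQ]; exists (pmul P Q); intros; rewrite pmul_eval, HP, HQ; auto. Qed.

Lemma is_poly_affine P a b : is_poly (fun x => poly_eval P (a * x + b)).
Proof.
  induction P as [|c P IH]; simpl.
  - apply is_poly_const.
  - apply is_poly_plus; [apply is_poly_const|].
    apply is_poly_mult; auto.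
    apply is_poly_plus; [apply is_poly_mult; [apply is_poly_const|apply is_poly_id]|apply is_poly_const].
Qed.

Lemma is_poly_comp_affine F a b : is_poly F -> is_poly (fun x => F (a * x + b)).
Proof.
  intros [P HP]. destruct (is_poly_affine P a b) as [Q HQ]. exists Q; intros; rewrite HP; auto.
Qed.

Lemma smooth_zero : smooth (fun _ => 0).
Proof.
  exists (fun _ _ => 0); split; auto; intros n x.
  apply (derivable_pt_lim_const 0 x).
Qed.

Lemma smooth_plus h1 h2 : smooth h1 -> smooth h2 -> smooth (fun x => h1 x + h2 x).
Proof.
  intros [D1 [E1 H1]] [D2 [E2 H2]].
  exists (fun n x => D1 n x + D2 n x); split.
  - subst; reflexivity.
  - intros n x. apply (derivable_pt_lim_plus (D1 n) (D2 n)); auto.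
Qed.

Lemma smooth_scal c h : smooth h -> smooth (fun x => c * h x).
Proof.
  intros [D [E H]].
  exists (fun n x => c * D n x); split.
  - subst; reflexivity.
  - intros n x. apply (derivable_pt_lim_scal (D n)); auto.
Qed.

Lemma smooth_xmul h : smooth h -> smooth (fun x => x * h x).
Proof.
  intros [D [E H]].
  exists (fun n x => x * D n x + INR n * D (Nat.pred n) x); split.
  - subst; apply functional_extensionality; intro x; simpl; ring.
  - intros n x.
    assert (Hd : derivable_pt_lim (fun y => D (Nat.pred n) y) x (match n with O => D 1%nat x | S m => D n x end)).
    { destruct n; simpl; auto. }
    pose proof (derivable_pt_lim_plus _ _ x _ _
       (derivable_pt_lim_mult id (D n) x _ _ (derivable_pt_lim_id x) (H n x))
       (derivable_pt_lim_scal _ (INR n) x _ Hd)) as K.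
    unfold plus_fct, mult_fct, mult_real_fct, id in K.
    replace (x * D (S n) x + INR (S n) * D (Nat.pred (S n)) x)
      with (1 * D n x + x * D (S n) x + INR n * match n with O => D 1%nat x | S m => D n x end).
    + exact K.
    + simpl Nat.pred. rewrite S_INR.
      destruct n; simpl; ring.
Qed.

Lemma smooth_mul_poly h P : smooth h -> smooth (fun x => h x * poly_eval P x).
Proof.
  intros Hh; induction P as [|a P IH]; simpl.
  - replace (fun x => h x * 0) with (fun _:R => 0) by (apply functional_extensionality; intro; ring).
    apply smooth_zero.
  - replace (fun x => h x * (a + x * poly_eval P x))
      with (fun x => a * h x + x * (h x * poly_eval P x))
      by (apply functional_extensionality; intro; ring).
    apply smooth_plus; [apply smooth_scal; auto | apply smooth_xmul; auto].
Qed.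

Fixpoint E (n : nat) (t : R) (phi : nat -> R) : R :=
  match n with
  | O => phi O
  | S n => t * E n t (fun k => phi (S k)) + (1 - t) * E n t phi
  end.

Lemma E_ext n t phi psi : (forall k, phi k = psi k) -> E n t phi = E n t psi.
Proof.
  revert phi psi; induction n; intros phi psi H; simpl; auto.
  rewrite (IHn (fun k => phi (S k)) (fun k => psi (S k))), (IHn phi psi); auto.
Qed.

Lemma E_add n t phi psi : E n t (fun k => phi k + psi k) = E n t phi + E n t psi.
Proof.
  revert phi psi; induction n; intros phi psi; simpl; auto.
  rewrite (IHn (fun k => phi (S k)) (fun k => psi (S k))), (IHn phi psi); ring.
Qed.

Lemma E_scal n t c phi : E n t (fun k => c * phi k) = c * E n t phi.
Proof.
  revert phi; induction n; intros phi; simpl; auto.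
  rewrite (IHn (fun k => phi (S k))), (IHn phi); ring.
Qed.

Lemma E_const n t c : E n t (fun _ => c) = c.
Proof. induction n; simpl; auto. rewrite IHn; ring. Qed.

Lemma E_mono n t phi psi : 0 <= t <= 1 ->
  (forall k, (k <= n)%nat -> phi k <= psi k) -> E n t phi <= E n t psi.
Proof.
  revert phi psi; induction n; intros phi psi Ht H; simpl.
  - apply H; lia.
  - assert (E n t (fun k => phi (S k)) <= E n t (fun k => psi (S k))) by (apply IHn; auto; intros; apply H; lia).
    assert (E n t phi <= E n t psi) by (apply IHn; auto; intros; apply H; lia).
    apply Rplus_le_compat; apply Rmult_le_compat_l; lra.
Qed.

Lemma E_abs n t phi : 0 <= t <= 1 -> Rabs (E n t phi) <= E n t (fun k => Rabs (phi k)).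
Proof.
  intros Ht. apply Rabs_le; split.
  - replace (- E n t (fun k => Rabs (phi k))) with (E n t (fun k => -1 * Rabs (phi k)))
      by (rewrite E_scal; ring).
    apply E_mono; auto; intros k _.
    pose proof (Rle_abs (- phi k)); rewrite Rabs_Ropp in *; lra.
  - apply E_mono; auto; intros; apply Rle_abs.
Qed.

Lemma E_S n t phi : E (S n) t phi = t * E n t (fun k => phi (S k)) + (1 - t) * E n t phi.
Proof. reflexivity. Qed.

Lemma E_id n t : E n t INR = INR n * t.
Proof.
  induction n; [simpl; ring|]. rewrite E_S.
  rewrite (E_ext n t (fun k => INR (S k)) (fun k => INR k + 1)) by (intros; apply S_INR).
  rewrite E_add, E_const, IHn. rewrite S_INR. ring.
Qed.

Lemma E_sq n t : E n t (fun k => INR k * INR k) = INR n * t + INR n * (INR n - 1) * t * t.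
Proof.
  induction n; [simpl; ring|]. rewrite E_S.
  rewrite (E_ext n t (fun k => INR (S k) * INR (S k))
             (fun k => (INR k * INR k + 2 * INR k) + 1))
    by (intros; rewrite S_INR; ring).
  rewrite E_add, E_add, E_scal, E_const, IHn, E_id. rewrite S_INR. ring.
Qed.

Lemma E_poly n phi : is_poly (fun t => E n t phi).
Proof.
  revert phi; induction n; intros phi; simpl.
  - apply is_poly_const.
  - apply is_poly_plus; apply is_poly_mult; auto.
    + apply is_poly_id.
    + destruct (is_poly_plus _ _ (is_poly_const 1) (is_poly_mult _ _ (is_poly_const (-1)) is_poly_id)) as [P HP].
      exists P; intros; rewrite <- HP; ring.
Qed.

Lemma bernstein (F : R -> R) (eta C : R) (n : nat) (t : R) :
  0 <= C -> (1 <= n)%nat -> 0 <= t <= 1 ->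
  (forall s s', 0 <= s <= 1 -> 0 <= s' <= 1 -> Rabs (F s - F s') <= eta + C * ((s - s') * (s - s'))) ->
  Rabs (F t - E n t (fun k => F (INR k / INR n))) <= eta + C / INR n.
Proof.
  intros HC Hn Ht HF.
  assert (Hn0 : 0 < INR n) by (apply lt_0_INR; lia).
  replace (F t - E n t (fun k => F (INR k / INR n)))
    with (E n t (fun k => F t + (-1) * F (INR k / INR n)))
    by (rewrite E_add, E_scal, E_const; ring).
  eapply Rle_trans; [apply E_abs; auto|].
  eapply Rle_trans.
  { apply (E_mono n t _ (fun k => eta + C * ((t - INR k / INR n) * (t - INR k / INR n)))); auto.
    intros k Hk. replace (F t + -1 * F (INR k / INR n)) with (F t - F (INR k / INR n)) by ring.
    apply HF; auto. split.
    - apply Rmult_le_pos; [apply pos_INR| left; apply Rinv_0_lt_compat; auto].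
    - apply le_INR in Hk. apply Rmult_le_reg_r with (INR n); auto.
      unfold Rdiv; rewrite Rmult_assoc, Rinv_l by lra; lra. }
  rewrite (E_ext n t _ (fun k => eta + C * ((t * t) + ((-2 * t / INR n) * INR k + (/ (INR n * INR n)) * (INR k * INR k)))))
    by (intros; field; lra).
  rewrite E_add, E_const, E_scal, E_add, E_const, E_add, (E_scal n t (-2*t/INR n) INR), (E_scal n t _ (fun k => INR k * INR k)), E_id, E_sq.
  apply Rplus_le_compat_l.
  replace (t * t + (-2 * t / INR n * (INR n * t) + / (INR n * INR n) * (INR n * t + INR n * (INR n - 1) * t * t)))
    with (t * (1 - t) / INR n) by (field; lra).
  unfold Rdiv. rewrite <- Rmult_assoc. apply Rmult_le_compat_r.
  - left; apply Rinv_0_lt_compat; auto.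
  - rewrite <- (Rmult_1_r C) at 2. apply Rmult_le_compat_l; auto. nra.
Qed.

Lemma abs_le_inv x M : Rabs x <= M -> -M <= x <= M.
Proof. unfold Rabs; destruct (Rcase_abs x); lra. Qed.

Lemma abs_lt_inv x M : Rabs x < M -> -M < x < M.
Proof. unfold Rabs; destruct (Rcase_abs x); lra. Qed.

Theorem mainTheorem7 (f g : R -> R) :
  VRD f ->
  (forall x : R, 0 < g x) ->
  (exists B : R, forall x : R, Rabs (g x) <= B) ->
  continuity g ->
  VRD (fun x => f x * g x).
Proof.
  intros [Hfpos Hf] Hg [B HB] Hcont. split.
  { intros x; apply Rmult_lt_0_compat; auto. }
  intros h Hs [M0 HM0] eps Heps.
  set (M := Rabs M0 + 1).
  assert (HMpos : 0 < M) by (unfold M; pose proof (Rabs_pos M0); lra).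
  assert (HM : forall x, M < Rabs x -> h x = 0).
  { intros x Hx; apply HM0; unfold M in Hx; pose proof (Rle_abs M0); lra. }
  assert (Hhc : forall x, continuity_pt h x).
  { destruct Hs as [D [HD0 HD]]. intros x. subst h.
    apply derivable_continuous_pt. exists (D 1%nat x). apply HD. }
  destruct (continuity_ab_maj (fun x => Rabs (h x)) (-M) M) as [xM [HxM _]]; [lra| |].
  { intros c _. apply (continuity_pt_comp h Rabs); auto. apply Rcontinuity_abs. }
  set (Hb := Rabs (h xM)).
  assert (HHb : forall x, Rabs (h x) <= Hb).
  { intros x. destruct (Rle_dec (Rabs x) M) as [H|H].
    - apply HxM. apply abs_le_inv; auto.
    - rewrite HM by lra. rewrite Rabs_R0. apply Rabs_pos. }
  assert (HHb0 : 0 <= Hb) by apply Rabs_pos.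
  assert (HB0 : 0 < B) by (pose proof (HB 0); pose proof (Hg 0); rewrite Rabs_right in H by lra; lra).
  assert (HgB : forall x, g x <= B) by (intros x; pose proof (HB x); rewrite Rabs_right in H by (pose proof (Hg x); lra); auto).
  destruct (continuity_ab_min g (-M) M) as [xm [Hxm _]]; [lra| intros; apply Hcont |].
  set (m := g xm).
  assert (Hm0 : 0 < m) by apply Hg.
  set (u := fun x => / g x).
  assert (Huc : forall x, continuity_pt u x).
  { intros x. apply (continuity_pt_inv g x (Hcont x)). pose proof (Hg x); lra. }
  set (eta := eps / (4 * (Hb + 1) * (B + 1))).
  assert (Heta : 0 < eta) by (unfold eta; apply Rdiv_lt_0_compat; [lra|]; apply Rmult_lt_0_compat; nra).
  destruct (Heine_cor2 (f := u) (a := -M) (b := M) (fun x _ => Huc x) (mkposreal eta Heta)) as [delta Hdelta].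
  simpl in Hdelta.
  assert (Hd0 : 0 < delta) by apply cond_pos.
  assert (Hu : forall x, -M <= x <= M -> 0 < u x <= / m).
  { intros x Hx. unfold u. split; [apply Rinv_0_lt_compat; auto|].
    apply Rinv_le_contravar; auto; apply Hxm; auto. }
  set (C := 2 / m / (delta * delta) * (4 * M * M)).
  assert (HC : 0 <= C).
  { unfold C. left. apply Rmult_lt_0_compat; [|nra].
    apply Rdiv_lt_0_compat; [apply Rdiv_lt_0_compat; lra| nra]. }
  set (F := fun s => u (-M + 2 * M * s)).
  assert (HF : forall s s', 0 <= s <= 1 -> 0 <= s' <= 1 -> Rabs (F s - F s') <= eta + C * ((s - s') * (s - s'))).
  { intros s s' Hs1 Hs2. unfold F.
    set (x := -M + 2 * M * s). set (y := -M + 2 * M * s').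
    assert (Hx : -M <= x <= M) by (unfold x; nra).
    assert (Hy : -M <= y <= M) by (unfold y; nra).
    assert (HCsq : 0 <= C * ((s - s') * (s - s'))) by (apply Rmult_le_pos; [exact HC| apply Rle_0_sqr]).
    destruct (Rlt_dec (Rabs (x - y)) delta) as [Hl|Hl].
    - left. pose proof (Hdelta x y Hx Hy Hl). lra.
    - assert (Hxy2 : delta * delta <= (x - y) * (x - y)).
      { apply Rnot_lt_le in Hl.
        replace ((x - y) * (x - y)) with (Rabs (x - y) * Rabs (x - y))
          by (unfold Rabs; destruct (Rcase_abs (x - y)); ring).
        apply Rmult_le_compat; lra. }
      assert (Hdiff : Rabs (u x - u y) <= 2 / m).
      { pose proof (Hu x Hx); pose proof (Hu y Hy).
        apply Rabs_le. unfold Rdiv. lra. }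
      assert (Hsq : (x - y) * (x - y) = 4 * M * M * ((s - s') * (s - s'))) by (unfold x, y; ring).
      assert (2 / m <= C * ((s - s') * (s - s'))).
      { unfold C. replace (2 / m / (delta * delta) * (4 * M * M) * ((s - s') * (s - s')))
          with (2 / m * ((x - y) * (x - y) / (delta * delta))) by (rewrite Hsq; field; lra).
        rewrite <- (Rmult_1_r (2 / m)) at 1. apply Rmult_le_compat_l.
        - left; apply Rdiv_lt_0_compat; lra.
        - apply Rmult_le_reg_r with (delta * delta); [nra|].
          unfold Rdiv; rewrite Rmult_assoc, Rinv_l by nra; lra. }
      lra. }
  destruct (archimed_cor1 (eta / (C + 1))) as [n [Hn1 Hn2]].
  { apply Rdiv_lt_0_compat; lra. }
  assert (HnR : 0 < INR n) by (apply lt_0_INR; lia).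
  assert (HCn : C / INR n <= eta).
  { apply Rmult_lt_compat_l with (r := C + 1) in Hn1; [|lra].
    replace ((C + 1) * (eta / (C + 1))) with eta in Hn1 by (field; lra).
    unfold Rdiv. apply Rle_trans with ((C + 1) * / INR n); [|lra].
    apply Rmult_le_compat_r; [left; apply Rinv_0_lt_compat|]; lra. }
  destruct (is_poly_comp_affine _ (/ (2 * M)) (1/2) (E_poly n (fun k => F (INR k / INR n)))) as [Q HQ].
  set (phi := fun x => h x * poly_eval Q x).
  assert (Hphis : smooth phi) by (apply smooth_mul_poly; auto).
  assert (Hphic : compact_support phi).
  { exists M. intros x Hx. unfold phi. rewrite HM by auto. ring. }
  set (d' := eps / (2 * (B + 1))).
  assert (Hd' : 0 < d') by (unfold d'; apply Rdiv_lt_0_compat; lra).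
  destruct (Hf phi Hphis Hphic d' Hd') as [P HP].
  exists P. intros x.
  assert (HBd : B * d' <= eps / 2).
  { unfold d'. replace (B * (eps / (2 * (B + 1)))) with (eps / 2 * (B / (B + 1))) by (field; lra).
    rewrite <- (Rmult_1_r (eps / 2)) at 2. apply Rmult_le_compat_l; [lra|].
    apply Rmult_le_reg_r with (B + 1); [lra|]. unfold Rdiv; rewrite Rmult_assoc, Rinv_l; lra. }
  assert (Hsecond : Rabs (g x * (phi x - f x * poly_eval P x)) <= eps / 2).
  { rewrite Rabs_mult. rewrite (Rabs_right (g x)) by (pose proof (Hg x); lra).
    apply Rle_trans with (B * d'); auto.
    apply Rmult_le_compat; auto; [pose proof (Hg x); lra | apply Rabs_pos]. }
  replace (h x - f x * g x * poly_eval P x)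
    with ((h x - g x * phi x) + g x * (phi x - f x * poly_eval P x)) by ring.
  eapply Rle_trans; [apply Rabs_triang|].
  enough (Rabs (h x - g x * phi x) <= eps / 2) by lra.
  destruct (Rle_dec (Rabs x) M) as [Hx|Hx].
  - apply abs_le_inv in Hx.
    set (t := / (2 * M) * x + 1 / 2).
    assert (Ht : 0 <= t <= 1).
    { unfold t. split.
      - apply Rmult_le_reg_l with (2 * M); [lra|].
        rewrite Rmult_plus_distr_l, <- Rmult_assoc, Rinv_r by lra. lra.
      - apply Rmult_le_reg_l with (2 * M); [lra|].
        rewrite Rmult_plus_distr_l, <- Rmult_assoc, Rinv_r by lra. lra. }
    assert (HFt : F t = u x).
    { unfold F. f_equal. unfold t. field. lra. }
    pose proof (bernstein F eta C n t HC ltac:(lia) Ht HF) as Hbern.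
    rewrite HFt in Hbern.
    assert (Hgx : 0 < g x) by apply Hg.
    replace (h x - g x * phi x) with (h x * g x * (u x - poly_eval Q x))
      by (unfold phi, u; field; lra).
    rewrite <- HQ. fold t.
    rewrite Rabs_mult, Rabs_mult, (Rabs_right (g x)) by lra.
    apply Rle_trans with (Hb * B * (2 * eta)).
    + apply Rmult_le_compat; try apply Rabs_pos.
      * apply Rmult_le_pos; [apply Rabs_pos|lra].
      * apply Rmult_le_compat; auto; try lra; apply Rabs_pos.
      * lra.
    + unfold eta. replace (Hb * B * (2 * (eps / (4 * (Hb + 1) * (B + 1)))))
        with (eps / 2 * ((Hb * B) / ((Hb + 1) * (B + 1)))) by (field; lra).
      rewrite <- (Rmult_1_r (eps / 2)) at 2. apply Rmult_le_compat_l; [lra|].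
      apply Rmult_le_reg_r with ((Hb + 1) * (B + 1)); [nra|].
      unfold Rdiv; rewrite Rmult_assoc, Rinv_l by nra. nra.
  - unfold phi. rewrite HM by lra. rewrite Rmult_0_l, Rmult_0_r, Rminus_0_r, Rabs_R0. lra.
Qed.
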